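(* Consider the control-affine system $\dot x = f(x) + g(x)u$ with $f,g$ Lipschitz and $\mathcal{C}^{m-1}$, state set $\mathcal{X}\subset\mathbb{R}^{n_x}$ compact, control set $\mathcal{U}\subset\mathbb{R}^{n_u}$ compact, and a $\mathcal{C}^m$ function $h$ of relative degree $m$. Assume (Assumption 1): the set $\mathcal{X}_e = \{x_e : \exists u_e \in \mathcal{U},\ 0 = f(x_e) + g(x_e)u_e\}$ is closed, convex and known, and $g(x_e)$ has full column rank for every $x_e \in \mathcal{X}_e$. Let $P_{\mathcal{X}_e}(x) = \arg\min\{\|x - x'\|_2 : x' \in \mathcal{X}_e\}$ and $\zeta(x_e) = -g(x_e)^\dagger f(x_e)$. With $\Gamma_i$, $\psi_i$, $a(x)$, $b(x)$ as in the context, let $c(x)$ be a vector orthogonal to $a(x)$ and continuous in $x$, let $d:\mathbb{R}\times\mathbb{R}\to\mathbb{R}$ be continuous with $d(0,0) > 0$, let $u_n$ be a nominal controller, and let $\pi'(x)$ be a minimizer of $\|u - u_n(x)\|_2^2$ over $u \in \mathcal{U}$ subject to $$a(x)^\top u \ge b(x), \qquad c(x)^\top\big[u - \zeta(P_{\mathcal{X}_e}(x))\big] \ge d\big(h(x), \|x - P_{\mathcal{X}_e}(x)\|_2\big).$$ Assume this problem is feasible for each $x \in \mathcal{X}$ and $\pi'(x) \notin \partial\mathcal{U}$. If the system controlled by $\pi'$ is at an equilibrium $(x_e,u_e)$, i.e. $u_e = \pi'(x_e)$ and $0 = f(x_e) + g(x_e)u_e$, then either (i) $u_n(x_e) = u_e$,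 or (ii) $d(h(x_e),0) = 0$ and $u_n(x_e) = \zeta(x_e) - \rho\, c(x_e)$ for some $\rho \ge 0$.
   Context: $h$ has relative degree $m$ means $L_g L_f^{i} h \equiv 0$ for $i = 0,\dots,m-2$. Let $\Gamma_1,\dots,\Gamma_m$ be class $\mathcal{K}$ functions (continuous, strictly increasing, zero at zero) with $\Gamma_i \in \mathcal{C}^{m-i}$; $\psi_0 = h$, $\psi_i = \dot\psi_{i-1} + \Gamma_i(\psi_{i-1})$ for $i = 1,\dots,m-1$ (time derivatives along the system); $a(x) = (L_g L_f^{m-1} h(x))^\top$ and $b(x) = -L_f^m h(x) - \sum_{i=0}^{m-1} L_f^i(\Gamma_{m-i}\circ\psi_{m-i-1})(x)$. $g^\dagger$ denotes the Moore–Penrose pseudoinverse and $\partial\mathcal{U}$ the boundary of $\mathcal{U}$. *)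

(* Defs.v *)
From HB Require Import structures.
From mathcomp Require Import all_boot all_order all_algebra.
From mathcomp Require Import all_classical all_reals all_analysis.
Set Implicit Arguments. Unset Strict Implicit. Unset Printing Implicit Defensive.
Import Order.TTheory GRing.Theory Num.Theory.
Import numFieldNormedType.Exports.
Local Open Scope classical_set_scope.
Local Open Scope ring_scope.

Section Defs.
Variable R : realType.

Definition norm2 n (x : 'cV[R]_n) : R := Num.sqrt (\sum_i (x i 0) ^+ 2).

Definition dotv n (v w : 'cV[R]_n) : R := (v^T *m w) 0 0.

(* C^k regularity, via continuity of all partial derivatives (along the
   given finite family of coordinate directions) up to order k. *)
Fixpoint Ck_dirs (V W : normedModType R) (dirs : seq V) (k : nat) (F : V -> W) : Prop :=
  match k with
  | 0 => continuous F
  | k'.+1 => continuous F /\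
      forall v, v \in dirs ->
        (forall x, derivable F x v) /\ Ck_dirs dirs k' (fun x => 'D_v F x)
  end.

Definition coord_dirs n : seq 'cV[R]_n := [seq delta_mx i 0 | i <- enum 'I_n].

Definition Ck n (W : normedModType R) (k : nat) (F : 'cV[R]_n -> W) : Prop :=
  Ck_dirs (coord_dirs n) k F.

Definition Ck1 (k : nat) (F : R -> R) : Prop := Ck_dirs [:: (1 : R)] k F.

(* class K function (on the whole real line) *)
Definition classK (G : R -> R) : Prop :=
  continuous G /\ {mono G : x y / x < y} /\ G 0 = 0.

Definition boundary (T : topologicalType) (A : set T) : set T :=
  closure A `\` interior A.

Definition is_MPinv m n (A : 'M[R]_(m, n)) (B : 'M[R]_(n, m)) : Prop :=
  [/\ A *m B *m A = A, B *m A *m B = B,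
      (A *m B)^T = A *m B & (B *m A)^T = B *m A].
Definition MPinv m n (A : 'M[R]_(m, n)) : 'M[R]_(n, m) :=
  xget 0 [set B | is_MPinv A B].

Definition Lie n (F : 'cV[R]_n -> 'cV[R]_n) (H : 'cV[R]_n -> R) : 'cV[R]_n -> R :=
  fun x => 'D_(F x) H x.
Definition Lie_iter n (F : 'cV[R]_n -> 'cV[R]_n) (k : nat) (H : 'cV[R]_n -> R) :=
  iter k (Lie F) H.
Definition LieG n nu (G : 'cV[R]_n -> 'M[R]_(n, nu)) (H : 'cV[R]_n -> R)
  : 'cV[R]_n -> 'rV[R]_nu :=
  fun x => \row_j 'D_(col j (G x)) H x.

Definition rel_degree n nu (F : 'cV[R]_n -> 'cV[R]_n) (G : 'cV[R]_n -> 'M[R]_(n, nu))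
  (H : 'cV[R]_n -> R) (m : nat) : Prop :=
  forall i, (i.+2 <= m)%N -> forall x, LieG G (Lie_iter F i H) x = 0.

Fixpoint psi n (F : 'cV[R]_n -> 'cV[R]_n) (Gam : nat -> R -> R)
  (H : 'cV[R]_n -> R) (i : nat) : 'cV[R]_n -> R :=
  match i with
  | 0 => H
  | i'.+1 => fun x => Lie F (psi F Gam H i') x + Gam i (psi F Gam H i' x)
  end.

Definition acbf n nu (F : 'cV[R]_n -> 'cV[R]_n) (G : 'cV[R]_n -> 'M[R]_(n, nu))
  (H : 'cV[R]_n -> R) (m : nat) : 'cV[R]_n -> 'cV[R]_nu :=
  fun x => (LieG G (Lie_iter F m.-1 H) x)^T.

Definition bcbf n (F : 'cV[R]_n -> 'cV[R]_n) (Gam : nat -> R -> R)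
  (H : 'cV[R]_n -> R) (m : nat) : 'cV[R]_n -> R :=
  fun x => - Lie_iter F m H x
           - \sum_(i < m) Lie_iter F i (fun y => Gam (m - i)%N (psi F Gam H (m - i - 1)%N y)) x.

End Defs.

(* Main.v *)
Require Import Defs.
From HB Require Import structures.
From mathcomp Require Import all_boot all_order all_algebra.
From mathcomp Require Import all_classical all_reals all_analysis.
Import Order.TTheory GRing.Theory Num.Theory.
Import numFieldNormedType.Exports.
Local Open Scope classical_set_scope.
Local Open Scope ring_scope.
From mathcomp Require Import zify.
From mathcomp Require Import lra.
Set Implicit Arguments. Unset Strict Implicit. Unset Printing Implicit Defensive.

Section Core.
Variable R : realType.
Variable V : normedModType R.

Lemma shiftP (f : V -> R) y u s :
  (derivable (fun t : R => f (t *: u + y)) s 1 <-> derivable f (s *: u + y) u) /\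
  'D_1 (fun t : R => f (t *: u + y)) s = 'D_u f (s *: u + y).
Proof.
have E : (fun h : R => h^-1 *: (((fun t : R => f (t *: u + y)) \o shift s) (h *: 1)
            - f (s *: u + y))) =
         (fun h => h^-1 *: ((f \o shift (s *: u + y)) (h *: u) - f (s *: u + y))).
  apply/funext => h /=.
  by rewrite [h *: 1]mulr1 scalerDl addrA.
by split; [rewrite /derivable E | rewrite /derive E].
Qed.

Lemma shift0P (f : V -> R) x u :
  (derivable (fun t : R => f (t *: u + x)) 0 1 <-> derivable f x u) /\
  'D_1 (fun t : R => f (t *: u + x)) 0 = 'D_u f x.
Proof. by have := shiftP f x u 0; rewrite scale0r add0r. Qed.

Lemma comp1 (G : R -> R) (f : V -> R) x v :
  derivable f x v -> derivable G (f x) 1 ->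
  derivable (G \o f) x v /\ 'D_v (G \o f) x = 'D_1 G (f x) * 'D_v f x.
Proof.
move=> df dG.
have [P1 P2] := shift0P f x v.
have [Q1 Q2] := shift0P (G \o f) x v.
have d1 : derivable (fun t : R => f (t *: v + x)) 0 1 by apply/P1.
have dG' : derivable G ((fun t : R => f (t *: v + x)) 0) 1.
  by rewrite /= scale0r add0r.
have dc : derivable (G \o (fun t : R => f (t *: v + x))) 0 1.
  apply/derivable1_diffP/differentiable_comp; apply/derivable1_diffP => //.
split; first by apply/Q1.
rewrite -Q2 -P2 -!derive1E.
have -> : (fun t : R => (G \o f) (t *: v + x)) = G \o (fun t : R => f (t *: v + x)) by [].
rewrite (derive1_comp d1 dG'); congr (_ * _).
by rewrite /= scale0r add0r.
Qed.

Lemma scaledir (f : V -> R) x e (a : R) :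
  derivable f x e -> derivable f x (a *: e) /\ 'D_(a *: e) f x = a * 'D_e f x.
Proof.
move=> de.
have [P1 P2] := shift0P f x e.
have [Q1 Q2] := shift0P f x (a *: e).
have d1 : derivable (fun t : R => f (t *: e + x)) 0 1 by apply/P1.
have E : (fun t : R => f (t *: (a *: e) + x)) = (fun t : R => f (t *: e + x)) \o (fun t => a * t).
  by apply/funext => t /=; rewrite scalerA mulrC.
have dm : derivable (fun t : R => a * t) 0 1.
  by have := derivableZ (k:=a) (@derivable_id _ R 0 1).
have d1' : derivable (fun t : R => f (t *: e + x)) ((fun t => a * t) 0) 1 by rewrite mulr0.
have dc : derivable ((fun t : R => f (t *: e + x)) \o (fun t => a * t)) 0 1.
  apply/derivable1_diffP/differentiable_comp; apply/derivable1_diffP => //.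
split; first by apply/Q1; rewrite E.
rewrite -Q2 E -derive1E (derive1_comp dm d1') [a * 0]mulr0 derive1E P2 mulrC.
congr (_ * _); rewrite derive1E.
have -> : [eta *%R a] = a \*: (@id R) by [].
rewrite deriveZ; last exact: (@derivable_id _ R).
by rewrite derive_id [a *: 1]mulr1.
Qed.


Lemma mvt0 (phi : R -> R) h : (forall t, derivable phi t 1) ->
  exists c, `|c| <= `|h| /\ phi h - phi 0 = 'D_1 phi c * h.
Proof.
move=> dphi.
have isd (t : R) : is_derive t (1:R) phi ('D_1 phi t) by apply: derivableP.
have ct (a b : R) : {within `[a, b], continuous phi}.
  by apply: derivable_within_continuous => z _.
case: (leP 0 h) => h0.
  have [c c0h E] := MVT_segment h0 (fun z _ => isd z) (ct 0 h).
  exists c; split; last by rewrite E subr0.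
  move: c0h; rewrite in_itv /= => /andP[c0 ch].
  by rewrite !ger0_norm // (le_trans c0 ch).
have [c c0h E] := MVT_segment (ltW h0) (fun z _ => isd z) (ct h 0).
exists c; split.
  move: c0h; rewrite in_itv /= => /andP[hc c0].
  by rewrite !ler0_norm ?(ltW h0) // lerN2.
by apply/eqP; rewrite -opprB E sub0r mulrN opprK.
Qed.

Lemma add2 (f : V -> R) u w x :
  (forall y, derivable f y u) -> derivable f x w -> {for x, continuous ('D_u f)} ->
  derivable f x (u + w) /\ 'D_(u + w) f x = 'D_u f x + 'D_w f x.
Proof.
move=> du dw cu.
suff H : (fun h : R => h^-1 *: ((f \o shift x) (h *: (u + w)) - f x)) @ 0^' -->
           'D_u f x + 'D_w f x.
  by split; [apply/cvg_ex; exists ('D_u f x + 'D_w f x) | exact: cvg_lim H].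
pose A := fun h : R => h^-1 *: (f (h *: u + (h *: w + x)) - f (h *: w + x)).
pose B := fun h : R => h^-1 *: ((f \o shift x) (h *: w) - f x).
have -> : (fun h : R => h^-1 *: ((f \o shift x) (h *: (u + w)) - f x)) = A \+ B.
  apply/funext => h; rewrite /A /B /=.
  rewrite -scalerDr; congr (_ *: _).
  by rewrite scalerDr -addrA [RHS]addrA subrK.
apply: cvgD; last exact: dw.
apply/cvgrPdist_lt => eps eps0.
have [d /= d0 Hd] := (nbhs_ballP _ _).1 ((cvgrPdist_lt _ _).1 cu eps eps0).
have k0 : 0 < d / (`|u| + `|w| + 1).
  by apply: divr_gt0.
near=> h.
have hne : h != 0 by near: h; exact: nbhs_dnbhs_neq.
have hs : `|h| < d / (`|u| + `|w| + 1) by near: h; exact: dnbhs0_lt.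
pose phi := fun t : R => f (t *: u + (h *: w + x)).
have dphi (t : R) : derivable phi t 1.
  by have [[_ P] _] := shiftP f (h *: w + x) u t; apply: P; exact: du.
have [c [hc E]] := mvt0 h dphi.
have -> : A h = 'D_u f (c *: u + (h *: w + x)).
  rewrite /A -(shiftP f (h *: w + x) u c).2 -/phi.
  have -> : f (h *: w + x) = phi 0 by rewrite /phi scale0r add0r.
  rewrite -/(phi h) E /= [h^-1 *: _]mulrC -mulrA mulfV // mulr1.
  by [].
apply: Hd; rewrite -ball_normE /ball_ /=.
rewrite (_ : x - _ = - (c *: u + h *: w)); last first.
  by rewrite addrA opprD addrCA subrr addr0.
rewrite normrN.
apply: (le_lt_trans (ler_normD _ _)).
rewrite !normrZ.
have P1 : `|c| * `|u| + `|h| * `|w| <= `|h| * (`|u| + `|w| + 1).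
  rewrite !mulrDr mulr1 -addrA lerD //; first by apply: ler_wpM2r.
  by rewrite lerDl.
apply: (le_lt_trans P1).
by rewrite -ltr_pdivlMr // ltr_wpDl // ?addr_ge0 // ltr01.
Unshelve. all: by end_near.
Qed.

End Core.

Section Lin.
Variable R : realType.
Variable n : nat.
Local Notation Cv := 'cV[R]_n.
Definition ee (i : 'I_n) : Cv := delta_mx i 0.

Lemma colE (v : Cv) : v = \sum_(i < n) v i 0 *: ee i.
Proof.
rewrite {1}(matrix_sum_delta v); apply: eq_bigr => i _.
by rewrite big_ord1.
Qed.

Lemma Lin (f : Cv -> R) :
  (forall i x, derivable f x (ee i)) -> (forall i, continuous ('D_(ee i) f)) ->
  forall v x, derivable f x v /\ 'D_v f x = \sum_(i < n) v i 0 * 'D_(ee i) f x.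
Proof.
move=> di ci v.
suff H : forall s : seq 'I_n, forall x, derivable f x (\sum_(i <- s) v i 0 *: ee i) /\
   'D_(\sum_(i <- s) v i 0 *: ee i) f x = \sum_(i <- s) v i 0 * 'D_(ee i) f x.
  by move=> x; rewrite {1 2}(colE v); apply: H.
elim=> [|i s IH] x.
  by rewrite !big_nil; split; [exact: derivable0 | exact: derive0].
rewrite !big_cons.
have du y : derivable f y (v i 0 *: ee i) by have [] := scaledir (v i 0) (di i y).
have Du : 'D_(v i 0 *: ee i) f = (fun y => v i 0 * 'D_(ee i) f y).
  by apply/funext => y; have [] := scaledir (v i 0) (di i y).
have cu0 : {for x, continuous (fun y => v i 0 * 'D_(ee i) f y)}.
  by apply: continuousM; [exact: cst_continuous | exact: ci].
have cu : {for x, continuous ('D_(v i 0 *: ee i) f)}.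
  rewrite /prop_for /continuous_at Du.
  by have [_ ->] := scaledir (v i 0) (di i x).
have [IH1 IH2] := IH x.
have [A1 A2] := add2 du IH1 cu.
split => //; rewrite A2 IH2.
by have [_ ->] := scaledir (v i 0) (di i x).
Qed.

End Lin.
Arguments ee {R n} i.

Section Reg.
Variable R : realType.
Variable n : nat.
Local Notation Cv := 'cV[R]_n.

Lemma in_coord (v : Cv) : (v \in coord_dirs R n) <-> exists i, v = ee i.
Proof.
split.
  by move=> /mapP [i _ ->]; exists i.
by move=> [i ->]; apply/mapP; exists i => //; rewrite mem_enum.
Qed.

Lemma CkS (W : normedModType R) k (F : Cv -> W) :
  Ck k.+1 F <-> continuous F /\ forall i, (forall x, derivable F x (ee i)) /\ Ck k ('D_(ee i) F).
Proof.
rewrite /Ck /=; split => [[cF H]|[cF H]]; split => //.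
  by move=> i; apply: H; apply/in_coord; exists i.
by move=> v /in_coord [i ->]; apply: H.
Qed.

Lemma Ck_cont (W : normedModType R) k (F : Cv -> W) : Ck k F -> continuous F.
Proof. by case: k => [|k] //= []. Qed.

Lemma Ck_weak (W : normedModType R) k (F : Cv -> W) : Ck k.+1 F -> Ck k F.
Proof.
elim: k F => [|k IH] F.
  by move=> /CkS [].
move=> /CkS [cF H]; apply/CkS; split => // i.
by have [d c] := H i; split => //; apply: IH.
Qed.

Lemma Ck_le (W : normedModType R) k k' (F : Cv -> W) : (k' <= k)%N -> Ck k F -> Ck k' F.
Proof.
move=> /subnK <-; elim: (k - k')%N => [|j IH] //= H.
by apply: IH; apply: Ck_weak.
Qed.

Lemma Ck_lin k (F : Cv -> R) : Ck k.+1 F ->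
  forall v x, derivable F x v /\ 'D_v F x = \sum_(i < n) v i 0 * 'D_(ee i) F x.
Proof.
move=> /CkS [cF H]; apply: Lin.
  by move=> i x; have [] := H i.
by move=> i; have [_ /Ck_cont] := H i.
Qed.

Lemma Ck_cst k (c : R) : Ck k (fun _ : Cv => c).
Proof.
elim: k c => [|k IH] c; first exact: cst_continuous.
apply/CkS; split; first exact: cst_continuous.
move=> i; split; first by move=> x; exact: derivable_cst.
have -> : 'D_(ee i) (fun _ : Cv => c) = (fun _ => 0).
  by apply/funext => x; exact: derive_cst.
exact: IH.
Qed.

Lemma Ck_add k (F G : Cv -> R) : Ck k F -> Ck k G -> Ck k (fun x => F x + G x).
Proof.
elim: k F G => [|k IH] F G.
  by move=> cF cG x; apply: continuousD; [exact: cF | exact: cG].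
move=> /CkS [cF HF] /CkS [cG HG]; apply/CkS; split.
  by move=> x; apply: continuousD; [exact: cF | exact: cG].
move=> i; have [dF DF] := HF i; have [dG DG] := HG i.
have -> : 'D_(ee i) (fun x => F x + G x) = (fun x => 'D_(ee i) F x + 'D_(ee i) G x).
  by apply/funext => x; apply: deriveD.
split; last exact: IH.
by move=> x; apply: derivableD.
Qed.

Lemma Ck_mul k (F G : Cv -> R) : Ck k F -> Ck k G -> Ck k (fun x => F x * G x).
Proof.
elim: k F G => [|k IH] F G.
  by move=> cF cG x; apply: continuousM; [exact: cF | exact: cG].
move=> CF CG; have CF' := Ck_weak CF; have CG' := Ck_weak CG.
move: CF CG => /CkS [cF HF] /CkS [cG HG]; apply/CkS; split.
  by move=> x; apply: continuousM; [exact: cF | exact: cG].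
move=> i; have [dF DF] := HF i; have [dG DG] := HG i.
have -> : 'D_(ee i) (fun x => F x * G x) =
   (fun x => F x * 'D_(ee i) G x + G x * 'D_(ee i) F x).
  by apply/funext => x; apply: (deriveM (dF x) (dG x)).
split; last by apply: Ck_add; apply: IH.
by move=> x; apply: (derivableM (dF x) (dG x)).
Qed.

Lemma Ck_sumseq k (I : Type) (s : seq I) (F : I -> Cv -> R) :
  (forall i, Ck k (F i)) -> Ck k (fun x => \sum_(i <- s) F i x).
Proof.
move=> H; elim: s => [|i s IH].
  have -> : (fun x : Cv => \sum_(i <- [::]) F i x) = (fun _ => 0).
    by apply/funext => x; rewrite big_nil.
  exact: Ck_cst.
have -> : (fun x : Cv => \sum_(j <- i :: s) F j x) =
   (fun x => F i x + \sum_(j <- s) F j x).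
  by apply/funext => x; rewrite big_cons.
exact: Ck_add.
Qed.

Lemma Ck_sum k m (F : 'I_m -> Cv -> R) :
  (forall i, Ck k (F i)) -> Ck k (fun x => \sum_(i < m) F i x).
Proof. exact: Ck_sumseq. Qed.

Lemma Ck1S k (G : R -> R) :
  Ck1 k.+1 G <-> continuous G /\ (forall x, derivable G x 1) /\ Ck1 k ('D_1 G).
Proof.
rewrite /Ck1; split.
  move=> [cG H]; have [dG CG] := H 1 (mem_head _ _).
  by split; [exact: cG | split; [exact: dG | exact: CG]].
move=> [cG [dG CG]]; split; first exact: cG.
by move=> v; rewrite inE => /eqP ->; split; [exact: dG | exact: CG].
Qed.

Lemma Ck1_cont k (G : R -> R) : Ck1 k G -> continuous G.
Proof. by case: k => [|k] //= []. Qed.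

Lemma Ck1_weak k (G : R -> R) : Ck1 k.+1 G -> Ck1 k G.
Proof.
elim: k G => [|k IH] G.
  by move=> /Ck1S [].
move=> /Ck1S [cG [dG H]]; apply/Ck1S; split => //; split => //.
exact: IH.
Qed.

Lemma Ck_comp k (G : R -> R) (F : Cv -> R) : Ck1 k G -> Ck k F -> Ck k (fun x => G (F x)).
Proof.
elim: k G F => [|k IH] G F.
  by move=> cG cF x; apply: continuous_comp; [exact: cF | exact: cG].
move=> CG CF; have CF' := Ck_weak CF.
move: CG CF => /Ck1S [cG [dG DG]] /CkS [cF HF]; apply/CkS; split.
  by move=> x; apply: continuous_comp; [exact: cF | exact: cG].
move=> i; have [dF DF] := HF i.
have -> : 'D_(ee i) (fun x => G (F x)) = (fun x => 'D_1 G (F x) * 'D_(ee i) F x).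
  by apply/funext => x; have [] := comp1 (dF x) (dG (F x)).
split; last by apply: Ck_mul => //; exact: (IH _ _ DG CF').
by move=> x; have [] := comp1 (dF x) (dG (F x)).
Qed.

Lemma Ck_coord k p q (M : Cv -> 'M[R]_(p, q)) i j :
  Ck k M -> Ck k (fun x => M x i j).
Proof.
elim: k M => [|k IH] M.
  by move=> cM x; by have := cvg_comp _ _ (cM x) (@coord_continuous R p q i j (M x)).
move=> /CkS [cM HM]; apply/CkS; split.
  by move=> x; by have := cvg_comp _ _ (cM x) (@coord_continuous R p q i j (M x)).
move=> l; have [dM DM] := HM l.
have -> : 'D_(ee l) (fun x => M x i j) = (fun x => 'D_(ee l) M x i j).
  by apply/funext => x; rewrite derive_mx // mxE.
split; last exact: IH.
by move=> x; move: (dM x) => /derivable_mxP; apply.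
Qed.

Lemma Lie_sum (f : Cv -> Cv) (H : Cv -> R) k : Ck k.+1 H ->
  Lie f H = (fun x => \sum_(i < n) f x i 0 * 'D_(ee i) H x).
Proof.
move=> CH; apply/funext => x; rewrite /Lie.
by have [_ ->] := Ck_lin CH (f x) x.
Qed.

Lemma Ck_Lie k (f : Cv -> Cv) (H : Cv -> R) : Ck k.+1 H -> Ck k f -> Ck k (Lie f H).
Proof.
move=> CH Cf; rewrite (Lie_sum f CH); apply: Ck_sum => i.
apply: Ck_mul; first exact: Ck_coord.
by move: CH => /CkS [_ HH]; have [] := HH i.
Qed.

End Reg.

Section GoodS.
Variable R : realType.
Variable n : nat.
Local Notation Cv := 'cV[R]_n.
Variables (f : Cv -> Cv) (h : Cv -> R) (m : nat).
Hypothesis Cf : Ck m.-1 f.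
Hypothesis Ch : Ck m h.

Inductive Good : nat -> nat -> (Cv -> R) -> Prop :=
| G_base l j r : (l <= j)%N -> (l + r <= m)%N -> Good j r (Lie_iter f l h)
| G_add j r F G : Good j r F -> Good j r G -> Good j r (fun x => F x + G x)
| G_mul j r F G : Good j r F -> Good j r G -> Good j r (fun x => F x * G x)
| G_comp j r (Ga : R -> R) F : Ck1 r Ga -> Good j r F -> Good j r (fun x => Ga (F x))
| G_weak j r F : Good j r.+1 F -> Good j r F
| G_wj j r F : Good j r F -> Good j.+1 r F.

Lemma Lie_iter_Ck l : (l <= m)%N -> Ck (m - l) (Lie_iter f l h).
Proof.
elim: l => [|l IH] lm; first by rewrite subn0.
have lm' : (l <= m)%N by apply: ltnW.
have := IH lm'; rewrite -(subnSK lm) => C.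
apply: Ck_Lie => //; apply: Ck_le Cf.
by case: m lm {IH lm' C} => // m' lm; rewrite /= subSS leq_subr.
Qed.

Lemma Good_Ck j r F : Good j r F -> Ck r F.
Proof.
elim=> {j r F}.
- move=> l j r lj lr.
  have lm : (l <= m)%N by lia.
  have rl : (r <= m - l)%N by lia.
  exact: (Ck_le rl (Lie_iter_Ck lm)).
- by move=> j r F G _ CF _ CG; apply: Ck_add.
- by move=> j r F G _ CF _ CG; apply: Ck_mul.
- by move=> j r Ga F CG _ CF; apply: Ck_comp.
- by move=> j r F _ CF; apply: Ck_weak.
- by [].
Qed.

Lemma Good_Lie j r' F : Good j r' F -> forall r, r' = r.+1 -> Good j.+1 r (Lie f F).
Proof.
elim=> {j r' F}.
- move=> l j r' lj lr r E; subst r'.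
  by apply: (@G_base l.+1 j.+1 r) => //; rewrite addSnnS.
- move=> j r' F G GF IF GG IG r E; subst r'.
  have -> : Lie f (fun x => F x + G x) = (fun x => Lie f F x + Lie f G x).
    apply/funext => x; rewrite /Lie; apply: deriveD.
      by have [] := Ck_lin (Good_Ck GF) (f x) x.
    by have [] := Ck_lin (Good_Ck GG) (f x) x.
  by apply: G_add; [exact: IF | exact: IG].
- move=> j r' F G GF IF GG IG r E; subst r'.
  have -> : Lie f (fun x => F x * G x) = (fun x => F x * Lie f G x + G x * Lie f F x).
    apply/funext => x; rewrite /Lie; apply: deriveM.
      by have [] := Ck_lin (Good_Ck GF) (f x) x.
    by have [] := Ck_lin (Good_Ck GG) (f x) x.
  apply: G_add; apply: G_mul.
  + by apply: G_wj; apply: G_weak.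
  + exact: IG.
  + by apply: G_wj; apply: G_weak.
  + exact: IF.
- move=> j r' Ga F CG GF IF r E; subst r'.
  move: (CG) => /Ck1S [_ [dG DG]].
  have -> : Lie f (fun x => Ga (F x)) = (fun x => 'D_1 Ga (F x) * Lie f F x).
    apply/funext => x; rewrite /Lie.
    have [dF _] := Ck_lin (Good_Ck GF) (f x) x.
    by have [] := comp1 dF (dG (F x)).
  apply: G_mul; last exact: IF.
  by apply: (@G_comp _ _ ('D_1 Ga) F DG); apply: G_wj; apply: G_weak.
- move=> j r' F GF IF r E; subst r'.
  by apply: G_weak; apply: IF.
- move=> j r' F GF IF r E; subst r'.
  by apply: G_wj; apply: IF.
Qed.

Lemma Good_Lie_iter k j r F : Good j (r + k) F -> Good (j + k) r (Lie_iter f k F).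
Proof.
elim: k r => [|k IH] r; first by rewrite !addn0.
rewrite addnS -addSn => G.
have := IH _ G => G'.
by rewrite addnS; apply: (Good_Lie G').
Qed.

Lemma Good_D0 j r F : Good j r F -> forall x w, (1 <= r)%N ->
  (forall l, (l <= j)%N -> 'D_w (Lie_iter f l h) x = 0) -> 'D_w F x = 0.
Proof.
elim=> {j r F}.
- by move=> l j r lj _ x w _ H; apply: H.
- move=> j r F G GF IF GG IG x w r1 H.
  case: r r1 GF GG IF IG => // r _ GF GG IF IG.
  rewrite deriveD.
  + by rewrite IF // IG // addr0.
  + by have [] := Ck_lin (Good_Ck GF) w x.
  + by have [] := Ck_lin (Good_Ck GG) w x.
- move=> j r F G GF IF GG IG x w r1 H.
  case: r r1 GF GG IF IG => // r _ GF GG IF IG.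
  rewrite deriveM.
  + by rewrite IF // IG // !scaler0 addr0.
  + by have [] := Ck_lin (Good_Ck GF) w x.
  + by have [] := Ck_lin (Good_Ck GG) w x.
- move=> j r Ga F CG GF IF x w r1 H.
  case: r r1 CG GF IF => // r _ CG GF IF.
  move: (CG) => /Ck1S [_ [dG _]].
  have [dF _] := Ck_lin (Good_Ck GF) w x.
  have [_ ->] := comp1 dF (dG (F x)).
  by rewrite IF // mulr0.
- by move=> j r F GF IF x w _ H; apply: IF.
- move=> j r F GF IF x w r1 H; apply: IF => // l lj; apply: H.
  exact: leqW.
Qed.

End GoodS.

Section EqS.
Variable R : realType.
Variables n nu : nat.
Local Notation Cv := 'cV[R]_n.
Variables (f : Cv -> Cv) (g : Cv -> 'M[R]_(n, nu)) (h : Cv -> R) (m : nat).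
Variable Gam : nat -> R -> R.
Variables (xe : Cv) (ue : 'cV[R]_nu).
Hypothesis Cf : Ck m.-1 f.
Hypothesis Ch : Ck m h.
Hypothesis m0 : (0 < m)%N.
Hypothesis rd : rel_degree f g h m.
Hypothesis HG : forall i, (1 <= i <= m)%N -> classK (Gam i) /\ Ck1 (m - i) (Gam i).
Hypothesis Heq : f xe + g xe *m ue = 0.

Lemma eq_Lie (H : Cv -> R) k : Ck k.+1 H ->
  Lie f H xe + (LieG g H xe *m ue) 0 0 = 0.
Proof.
move=> CH.
have Ef : f xe = - (g xe *m ue) by apply/eqP; rewrite -addr_eq0 Heq.
rewrite /Lie; have [_ ->] := Ck_lin CH (f xe) xe.
rewrite mxE.
have E2 : \sum_(j < nu) LieG g H xe 0 j * ue j 0 =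
    \sum_(j < nu) \sum_(i < n) g xe i j * 'D_(ee i) H xe * ue j 0.
  apply: eq_bigr => j _; rewrite /LieG mxE.
  have [_ ->] := Ck_lin CH (col j (g xe)) xe.
  by rewrite mulr_suml; apply: eq_bigr => i _; rewrite mxE.
rewrite E2 exchange_big /=.
have E3 : \sum_(i < n) f xe i 0 * 'D_(ee i) H xe =
    - \sum_(i < n) \sum_(j < nu) g xe i j * 'D_(ee i) H xe * ue j 0.
  rewrite -sumrN; apply: eq_bigr => i _; rewrite Ef mxE [(g xe *m ue) i 0]mxE mulNr mulr_suml.
  by congr (- _); apply: eq_bigr => j _; rewrite mulrAC.
by rewrite E3 addNr.
Qed.

Lemma LfD0 l : (l.+2 <= m)%N -> Lie f (Lie_iter f l h) xe = 0.
Proof.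
move=> lm.
have C : Ck (m - l) (Lie_iter f l h) by apply: Lie_iter_Ck => //; lia.
have C1 : Ck 1 (Lie_iter f l h) by apply: Ck_le C; lia.
have := eq_Lie C1; rewrite (rd lm xe) mul0mx mxE addr0.
by [].
Qed.

Lemma Good_Lie0 j r F : Good f h m j r F -> (j.+2 <= m)%N -> (1 <= r)%N ->
  Lie f F xe = 0.
Proof.
move=> GF jm r1; rewrite /Lie; apply: (Good_D0 Cf Ch GF) => // l lj.
by apply: LfD0; lia.
Qed.

Lemma psi_Good k : (k <= m)%N -> Good f h m k (m - k) (psi f Gam h k).
Proof.
elim: k => [|k IH] km.
  by rewrite subn0; apply: (@G_base _ _ f h m 0 0 m).
have km' : (k <= m)%N by lia.
have G := IH km'.
have E : (m - k = (m - k.+1).+1)%N by lia.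
rewrite E in G.
have [_ CG] := @HG k.+1 (ltac:(lia)).
apply: G_add.
  exact: (Good_Lie Cf Ch G).
apply: (@G_comp _ _ _ _ _ _ _ (Gam k.+1) (psi f Gam h k) CG).
by apply: G_wj; apply: G_weak.
Qed.

Lemma classK_inj (G : R -> R) y : classK G -> G y = 0 -> y = 0.
Proof.
move=> [_ [mono G0]] Gy.
case: (ltgtP y 0) => // yl.
  by have := yl; rewrite -mono G0 Gy ltxx.
by have := yl; rewrite -mono G0 Gy ltxx.
Qed.

Lemma psi_zero k : (k.+1 <= m)%N -> psi f Gam h k xe = 0 -> h xe = 0.
Proof.
elim: k => [|k IH] km //.
move=> /= E; apply: IH; first by lia.
have L0 : Lie f (psi f Gam h k) xe = 0.
  by apply: (Good_Lie0 (psi_Good (ltac:(lia) : (k <= m)%N))); lia.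
rewrite L0 add0r in E.
have [K _] := @HG k.+1 (ltac:(lia)).
exact: classK_inj K E.
Qed.

Lemma T_value :
  dotv (acbf f g h m xe) ue - bcbf f Gam h m xe = Gam m (psi f Gam h m.-1 xe).
Proof.
case: m m0 Cf Ch rd HG psi_Good Good_Lie0 eq_Lie => // m' _ Cf' Ch' rd' HG' pG GL0 eL.
rewrite /dotv /acbf trmxK /bcbf opprB opprK.
have C1 : Ck 1 (Lie_iter f m' h).
  by have := Lie_iter_Ck Cf' Ch' (leqnSn m'); rewrite subSnn.
have E1 := eL _ _ C1.
have -> : Lie_iter f m'.+1 h xe = Lie f (Lie_iter f m' h) xe by [].
rewrite big_ord_recl /= subn0 subSS subn0.
rewrite big1; last first.
  move=> i _; rewrite add0n /bump leq0n add1n subSS.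
have ilt := ltn_ord i.
apply: (GL0 (m' - i - 1 + i)%N 1%N); last by [].
  apply: Good_Lie_iter => //.
  rewrite add1n.
  have [_ CG] := HG' (m' - i)%N (ltac:(lia)).
  have E : (m'.+1 - (m' - i) = i.+1)%N by lia.
  rewrite E in CG.
  apply: (@G_comp _ _ _ _ _ _ _ (Gam (m' - i)%N) (psi f Gam h (m' - i - 1)) CG).
  have G := pG (m' - i - 1)%N (ltac:(lia)).
  have E' : (m'.+1 - (m' - i - 1) = i.+2)%N by lia.
  rewrite E' in G.
  exact: G_weak.
lia.
rewrite addr0 addrCA [_ + Lie f _ xe]addrC E1 addr0.
by [].
Qed.

End EqS.

Section Vec.
Variable R : realType.

Lemma dotvE n (x y : 'cV[R]_n) : dotv x y = \sum_i x i 0 * y i 0.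
Proof. by rewrite /dotv mxE; apply: eq_bigr => i _; rewrite mxE. Qed.

Lemma dotvC n (x y : 'cV[R]_n) : dotv x y = dotv y x.
Proof. by rewrite !dotvE; apply: eq_bigr => i _; rewrite mulrC. Qed.

Lemma dotvDr n (x y z : 'cV[R]_n) : dotv x (y + z) = dotv x y + dotv x z.
Proof. by rewrite !dotvE -big_split; apply: eq_bigr => i _; rewrite mxE mulrDr. Qed.

Lemma dotvZr n (x y : 'cV[R]_n) k : dotv x (k *: y) = k * dotv x y.
Proof. by rewrite !dotvE mulr_sumr; apply: eq_bigr => i _; rewrite mxE mulrCA. Qed.

Lemma dotvNr n (x y : 'cV[R]_n) : dotv x (- y) = - dotv x y.
Proof. by rewrite -scaleN1r dotvZr mulN1r. Qed.

Lemma dotvBr n (x y z : 'cV[R]_n) : dotv x (y - z) = dotv x y - dotv x z.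
Proof. by rewrite dotvDr dotvNr. Qed.

Lemma dotv0r n (x : 'cV[R]_n) : dotv x 0 = 0.
Proof. by rewrite dotvE big1 // => i _; rewrite mxE mulr0. Qed.

Lemma dotv_ge0 n (x : 'cV[R]_n) : 0 <= dotv x x.
Proof. by rewrite dotvE; apply: sumr_ge0 => i _; rewrite -expr2 sqr_ge0. Qed.

Lemma dotv_eq0 n (x : 'cV[R]_n) : dotv x x = 0 -> x = 0.
Proof.
rewrite dotvE => /eqP; rewrite psumr_eq0; last by move=> i _; rewrite -expr2 sqr_ge0.
move=> /allP H; apply/matrixP => i j; rewrite ord1 mxE.
have := H i (mem_index_enum i); rewrite -expr2 sqrf_eq0 => /eqP; by [].
Qed.

Lemma norm2_sq n (x : 'cV[R]_n) : norm2 x ^+ 2 = dotv x x.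
Proof.
rewrite /norm2 sqr_sqrtr; last by apply: sumr_ge0 => i _; exact: sqr_ge0.
by rewrite dotvE; apply: eq_bigr => i _; rewrite expr2.
Qed.

Lemma norm2_eq0 n (x : 'cV[R]_n) : norm2 x = 0 -> x = 0.
Proof. by move=> H; apply: dotv_eq0; rewrite -norm2_sq H expr0n. Qed.

Lemma norm2_0 n : norm2 (0 : 'cV[R]_n) = 0.
Proof. by rewrite /norm2 big1 ?sqrtr0 // => i _; rewrite mxE expr0n. Qed.

Lemma norm2_ge0 n (x : 'cV[R]_n) : 0 <= norm2 x.
Proof. exact: sqrtr_ge0. Qed.

Lemma AtA_unit n p (A : 'M[R]_(n, p)) : \rank A = p -> A^T *m A \in unitmx.
Proof.
move=> rA.
have rf : row_free A^T by rewrite /row_free mxrank_tr rA.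
have inj : forall u : 'rV[R]_p, u *m (A^T *m A) = 0 -> u = 0.
  move=> u H.
  have H2 : (u *m A^T) *m (u *m A^T)^T = 0.
    by rewrite trmx_mul trmxK !mulmxA -(mulmxA u) H mul0mx.
  have H3 : (u *m A^T)^T = 0.
    apply: dotv_eq0; rewrite /dotv trmxK.
    by rewrite H2 mxE.
  have H4 : u *m A^T = 0 *m A^T.
    by rewrite mul0mx -(trmxK (u *m A^T)) H3 trmx0.
  exact: (row_free_inj rf H4).
rewrite -row_free_unit -kermx_eq0; apply/eqP/row_matrixP => i.
rewrite row0; apply: inj.
by rewrite -row_mul mulmx_ker row0.
Qed.

Lemma MP_left n p (A : 'M[R]_(n, p)) : \rank A = p -> MPinv A *m A = 1%:M.
Proof.
move=> rA; have U := AtA_unit rA.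
set B0 := invmx (A^T *m A) *m A^T.
have HP : is_MPinv A B0.
  split.
  - by rewrite /B0 -!mulmxA mulVmx // mulmx1.
  - by rewrite /B0 -(mulmxA (invmx (A^T *m A)) A^T A) mulVmx // mul1mx.
  - by rewrite /B0 !trmx_mul trmxK trmx_inv trmx_mul trmxK -mulmxA.
  - by rewrite /B0 -(mulmxA (invmx (A^T *m A)) A^T A) mulVmx // trmx1.
have [M1 _ _ _] : is_MPinv A (MPinv A) by apply: xgetPex; exists B0.
have E : invmx (A^T *m A) *m (A^T *m (A *m MPinv A *m A)) = MPinv A *m A.
  by rewrite -mulmxA (mulmxA A^T) (mulmxA (invmx _)) mulVmx // mul1mx.
by rewrite M1 mulVmx // in E.
Qed.

End Vec.

Section Opt.
Variable R : realType.

Lemma small_pos (p q d : R) : 0 < d -> 0 <= q ->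
  (forall t, 0 < t -> t < d -> 2 * p <= t * q) -> p <= 0.
Proof.
move=> d0 q0 H; rewrite leNgt; apply/negP => p0.
have q1 : 0 < q + 1 by apply: ltr_wpDl.
have [t [t0 [td tq]]] : exists t, 0 < t /\ t < d /\ t * (q + 1) <= p.
  case: (leP (d / 2) (p / (q + 1))) => hd.
    exists (d / 2); split; first by apply: divr_gt0.
    split; first by rewrite ltr_pdivrMr // ltr_pMr // ltr1n.
    by rewrite -ler_pdivlMr.
  exists (p / (q + 1)); split; first by apply: divr_gt0.
  split; first by apply: lt_trans hd _; rewrite ltr_pdivrMr // ltr_pMr // ltr1n.
  by rewrite divfK // gt_eqF.
have := H t t0 td; rewrite mulrDr mulr1 in tq.
move=> H2.
have : 2 * p <= p by apply: le_trans H2 _; apply: le_trans tq; rewrite lerDl ltW.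
by rewrite mulr2n mulrDl mul1r gerDr leNgt p0.
Qed.

Lemma dotv_sq n (w v : 'cV[R]_n) t :
  dotv (t *: w - v) (t *: w - v) = t * (t * dotv w w - dotv v w) - (t * dotv v w - dotv v v).
Proof.
rewrite dotvBr dotvZr (dotvC _ w) (dotvC _ v) !dotvBr !dotvZr (dotvC w v).
by [].
Qed.

Lemma opt_core n (ue un cc : 'cV[R]_n) (D : R) (S : set 'cV[R]_n) :
  D <= 0 ->
  (forall w, (D < 0 \/ 0 <= dotv cc w) ->
      exists2 d, 0 < d & forall t, 0 < t -> t < d -> S (ue + t *: w)) ->
  (forall u, S u -> norm2 (ue - un) ^+ 2 <= norm2 (u - un) ^+ 2) ->
  un = ue \/ (D = 0 /\ exists2 rho, 0 <= rho & un = ue - rho *: cc).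
Proof.
move=> D0 adm opt.
set v := un - ue.
have Eun : un = ue + v by rewrite /v addrC subrK.
have key w : (D < 0 \/ 0 <= dotv cc w) -> dotv v w <= 0.
  move=> /adm [d d0 Hd].
  apply: (@small_pos _ (dotv w w) d) => //; first exact: dotv_ge0.
  move=> t t0 td; have := opt _ (Hd t t0 td).
  have -> : ue - un = - v by rewrite /v opprB.
  have -> : ue + t *: w - un = t *: w - v by rewrite /v opprB addrA (addrC ue).
  rewrite !norm2_sq dotv_sq dotvNr (dotvC _ v) dotvNr opprK => H.
  rewrite -(ler_pM2l t0).
  set a := dotv w w in H *; set b := dotv v w in H *; set c := dotv v v in H *.
  have E : t * (t * a) - t * (2 * b) = t * (t * a - b) - (t * b - c) - c.
    by rewrite !mulrBr mulr2n mulrDl mul1r mulrDr; lra.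
  by rewrite -subr_ge0 E subr_ge0.
have vv := dotv_ge0 v.
case: (ltgtP D 0) => hD; last 1 first.
- right; split => //.
  have k0 w : dotv cc w = 0 -> dotv v w = 0.
    move=> c0; apply/eqP; rewrite eq_le key ?c0 ?lexx; last by right.
    have := key (- w); rewrite !dotvNr c0 oppr0 lexx oppr_le0 => K.
    by rewrite K //; right.
  have kc : dotv v cc <= 0 by apply: key; right; exact: dotv_ge0.
  case: (eqVneq (dotv cc cc) 0) => ccc.
    have c0 : cc = 0 by apply: dotv_eq0.
    exists 0; first by [].
    have v0 : v = 0.
      apply: dotv_eq0; apply/eqP; rewrite eq_le vv andbT; apply: key.
      by right; rewrite c0 dotvC dotv0r.
    by rewrite Eun v0 scale0r subr0 addr0.
  set rho := - dotv v cc / dotv cc cc.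
  exists rho.
    by apply: divr_ge0; [rewrite oppr_ge0 | exact: dotv_ge0].
  set w1 := v + rho *: cc.
  have cw : dotv cc w1 = 0.
    by rewrite /w1 dotvDr dotvZr (dotvC cc v) /rho divfK // addrN.
  have vw := k0 _ cw.
  have ww : dotv w1 w1 = 0.
    by rewrite {1}/w1 dotvC dotvDr dotvZr (dotvC w1 v) vw (dotvC w1 cc) cw mulr0 addr0.
  have w0 := dotv_eq0 ww.
  have Ev : v = - (rho *: cc) by apply/eqP; rewrite -addr_eq0 -/w1 w0.
  by rewrite Eun Ev.
- left.
  have v0 : v = 0.
    by apply: dotv_eq0; apply/eqP; rewrite eq_le vv andbT; apply: key; left.
  by rewrite Eun v0 addr0.
- by move: D0; rewrite leNgt hD.
Qed.

End Opt.


Unset Implicit Arguments.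

Theorem proposition3 (R : realType) (nx nu m : nat)
  (f : 'cV[R]_nx -> 'cV[R]_nx) (g : 'cV[R]_nx -> 'M[R]_(nx, nu))
  (h : 'cV[R]_nx -> R) (X : set 'cV[R]_nx) (U : set 'cV[R]_nu)
  (Gam : nat -> R -> R)
  (c : 'cV[R]_nx -> 'cV[R]_nu) (d : R -> R -> R) (un : 'cV[R]_nx -> 'cV[R]_nu)
  (P : 'cV[R]_nx -> 'cV[R]_nx) (pi' : 'cV[R]_nx -> 'cV[R]_nu)
  (xe : 'cV[R]_nx) (ue : 'cV[R]_nu) :
  (* system regularity *)
  lipschitz f -> lipschitz g -> Ck m.-1 f -> Ck m.-1 g ->
  compact X -> compact U ->
  (0 < m)%N -> Ck m h -> rel_degree f g h m ->
  (* class K functions Gamma_1, ..., Gamma_m with Gamma_i in C^(m-i) *)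
  (forall i, (1 <= i <= m)%N -> classK (Gam i) /\ Ck1 (m - i) (Gam i)) ->
  (* Assumption 1 *)
  let Xe := [set x | exists2 u, U u & f x + g x *m u = 0] in
  closed Xe -> convex_set Xe ->
  (forall x, Xe x -> \rank (g x) = nu) ->
  (* projection onto Xe (Euclidean) *)
  (forall x, Xe (P x) /\ forall x', Xe x' -> norm2 (x - P x) <= norm2 (x - x')) ->
  let zeta := fun x => - (MPinv (g x) *m f x) in
  let a := acbf f g h m in
  let b := bcbf f Gam h m in
  (* c orthogonal to a and continuous; d continuous with d(0,0) > 0 *)
  (forall x, dotv (c x) (a x) = 0) -> continuous c ->
  continuous (fun p : R * R => d p.1 p.2) -> 0 < d 0 0 ->
  let feas := fun x u =>
    [/\ U u, b x <= dotv (a x) u &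
        d (h x) (norm2 (x - P x)) <= dotv (c x) (u - zeta (P x))] in
  (* the QP is feasible on X, pi' is a minimizer, and not on the boundary of U *)
  (forall x, X x -> exists u, feas x u) ->
  (forall x, X x -> feas x (pi' x) /\
     forall u, feas x u -> norm2 (pi' x - un x) ^+ 2 <= norm2 (u - un x) ^+ 2) ->
  (forall x, X x -> ~ boundary U (pi' x)) ->
  (* closed-loop equilibrium *)
  X xe -> ue = pi' xe -> f xe + g xe *m ue = 0 ->
  un xe = ue \/
  (d (h xe) 0 = 0 /\ exists2 rho : R, 0 <= rho & un xe = zeta xe - rho *: c xe).
Proof.
move=> Lf Lg Cf Cg cX cU m0 Ch rd HG Xe cXe convXe rk HP zeta a b cort cc dcont d00
  feas feasX opt nbd Xxe Eue Heq.
have [fe mn] := opt xe Xxe.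
rewrite -Eue in fe mn.
case: fe => Uue bA cC.
have Xxe' : Xe xe by exists ue.
have Pxe : P xe = xe.
  have [_ Pmin] := HP xe.
  have := Pmin xe Xxe'; rewrite subrr norm2_0 => H.
  have H0 : norm2 (xe - P xe) = 0 by apply/eqP; rewrite eq_le H norm2_ge0.
  by apply/esym/eqP; rewrite -subr_eq0; apply/eqP; apply: norm2_eq0.
have zxe : zeta xe = ue.
  have Ef : f xe = - (g xe *m ue) by apply/eqP; rewrite -addr_eq0 Heq.
  by rewrite /zeta Ef mulmxN opprK mulmxA MP_left ?mul1mx //; apply: rk.
rewrite Pxe subrr norm2_0 zxe subrr dotv0r in cC.
set D := d (h xe) 0 in cC *.
have hne : h xe != 0.
  by apply/eqP => h0; move: cC; rewrite /D h0 leNgt d00.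
have TV := T_value Cf Ch m0 rd HG Heq.
have Tpos : b xe < dotv (a xe) ue.
  rewrite lt_def bA andbT; apply/eqP => E.
  have : Gam m (psi f Gam h m.-1 xe) = 0.
    by rewrite -TV -/(a xe) -/(b xe) E subrr.
  have [K _] := HG m (ltac:(lia)).
  have mm : (m.-1 < m)%N by rewrite ltn_predL.
  move=> /(classK_inj K) /(psi_zero Cf Ch m0 rd HG Heq mm) h0.
  by move/eqP: hne.
have ob : forall u, feas xe u -> norm2 (ue - un xe) ^+ 2 <= norm2 (u - un xe) ^+ 2.
  by move=> u fu; apply: mn.
have Uint : interior U ue.
  apply: contrapT => nI; apply: (nbd xe Xxe); rewrite -Eue; split => //.
  exact: subset_closure.
have [r /= r0 Hr] := (nbhs_ballP _ _).1 Uint.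
have adm : forall w, (D < 0 \/ 0 <= dotv (c xe) w) ->
    exists2 dd, 0 < dd & forall t, 0 < t -> t < dd -> feas xe (ue + t *: w).
  move=> w Hw.
  set d1 := r / (`|w| + 1).
  set d2 := (dotv (a xe) ue - b xe) / (`|dotv (a xe) w| + 1).
  set d3 := if (0 <= dotv (c xe) w) then 1 else - D / (`|dotv (c xe) w| + 1).
  have w1 : 0 < `|w| + 1 by apply: ltr_wpDl.
  have aw1 : 0 < `|dotv (a xe) w| + 1 by apply: ltr_wpDl.
  have cw1 : 0 < `|dotv (c xe) w| + 1 by apply: ltr_wpDl.
  have d10 : 0 < d1 by apply: divr_gt0.
  have d20 : 0 < d2 by apply: divr_gt0 => //; rewrite subr_gt0.
  have d30 : 0 < d3.
    rewrite /d3; case: ifP => // c0; apply: divr_gt0 => //.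
    rewrite oppr_gt0; case: Hw => // c1; by rewrite c1 in c0.
  exists (Num.min d1 (Num.min d2 d3)); first by rewrite !lt_min d10 d20 d30.
  move=> t t0; rewrite !lt_min => /and3P [td1 td2 td3].
  split.
  - apply: Hr; rewrite -ball_normE /ball_ /= opprD addrA subrr sub0r normrN normrZ.
    rewrite gtr0_norm //.
    apply: (le_lt_trans (y := t * (`|w| + 1))); first by rewrite ler_pM2l // lerDl.
    by rewrite -ltr_pdivlMr.
  - rewrite dotvDr dotvZr.
    have : t * `|dotv (a xe) w| < dotv (a xe) ue - b xe.
      apply: (le_lt_trans (y := t * (`|dotv (a xe) w| + 1))).
        by rewrite ler_pM2l // lerDl.
      by rewrite -ltr_pdivlMr.
    have : - (t * `|dotv (a xe) w|) <= t * dotv (a xe) w.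
      by rewrite -mulrN ler_pM2l // lerNnormlW.
    move=> H1 H2; lra.
  - rewrite Pxe subrr norm2_0 zxe -/D addrAC subrr add0r dotvZr.
    move: td3; rewrite /d3; case: ifP => c0 td3.
      by apply: (le_trans cC); apply: mulr_ge0 => //; apply: ltW.
    have : t * `|dotv (c xe) w| < - D.
      apply: (le_lt_trans (y := t * (`|dotv (c xe) w| + 1))).
        by rewrite ler_pM2l // lerDl.
      by rewrite -ltr_pdivlMr.
    have : - (t * `|dotv (c xe) w|) <= t * dotv (c xe) w.
      by rewrite -mulrN ler_pM2l // lerNnormlW.
    move=> H1 H2; apply: ltW; lra.
have := opt_core cC adm ob.
case=> [E|[D0 [rho r0' E]]]; first by left.
right; split => //.
by exists rho => //; rewrite zxe.
Qed.
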